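(* Let $d\ge1$, $N\ge2$, $\alpha\ge1$, $P=(0,N)^d\cap\mathbb{Z}^d$, and let ALG process an arbitrary finite online sequence of sets $O_1\cap P,\dots,O_m\cap P$, where each $O_j\subseteq(0,N)^d$ is open, $\alpha$-fat, with $O_j\cap P\ne\emptyset$. Let $\mathcal{S}'$ be the set of indices $j$ such that $O_j\cap P$ was not hit (i.e. disjoint from ALG's current set $P'$) at its arrival. Then for every integer $l\ge0$ and every $p\in P$, the number of $j\in\mathcal{S}'$ with $\ell(O_j)=l$ and $p\in O_j$ is at most $(4\alpha+1)^d$.
   Context: A $d$-cube is an axis-parallel hypercube; width = side length. In-width of $O$: supremum of widths of $d$-cubes contained in $O$; out-width: infimum of widths of $d$-cubes containing $O$; a nonempty bounded open $O$ is $\alpha$-fat if out-width$(O)\le\alpha\cdot$in-width$(O)$. For a positive integer $i$, $\ell(i)$ is the largest $k\ge0$ with $2^k\mid i$; for $x\in P$, $\ell(x)=\min_i\ell(x_i)$; $\ell(O)=\max\{\ell(x):x\in O\cap P\}$. Algorithm ALG: start with $P'=\emptyset$; when $O\cap P$ arrives, if $O\cap P'\ne\emptyset$ do nothing, otherwise add to $P'$ all points of $O\cap P$ of level $\ell(O)$. *)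

(* Defs.v *)
From mathcomp Require Import all_boot.
From mathcomp Require Import boolp.
From Stdlib Require Import Reals.

Set Implicit Arguments.
Unset Strict Implicit.
Unset Printing Implicit Defensive.

Definition pointR (d : nat) := 'I_d -> R.
Definition regionR (d : nat) := pointR d -> Prop.

(* Open in R^d (for the sup-norm balls, which generate the usual topology). *)
Definition openR (d : nat) (O : regionR d) : Prop :=
  forall x, O x -> exists eps : R, (0 < eps)%R /\
    forall y : pointR d, (forall i, Rabs (y i - x i) < eps)%R -> O y.

Definition cube (d : nat) (c : pointR d) (w : R) : regionR d :=
  fun x => forall i, (c i <= x i <= c i + w)%R.

Definition inwidth_set (d : nat) (O : regionR d) : R -> Prop :=
  fun w => (0 <= w)%R /\ exists c, forall x, cube c w x -> O x.
Definition outwidth_set (d : nat) (O : regionR d) : R -> Prop :=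
  fun w => (0 <= w)%R /\ exists c, forall x, O x -> cube c w x.

Definition is_glb (E : R -> Prop) (m : R) : Prop :=
  (forall x, E x -> (m <= x)%R) /\ (forall b, (forall x, E x -> (b <= x)%R) -> (b <= m)%R).

Definition in_width (d : nat) (O : regionR d) (a : R) : Prop := is_lub (inwidth_set O) a.
Definition out_width (d : nat) (O : regionR d) (b : R) : Prop := is_glb (outwidth_set O) b.

Definition nonempty_bounded (d : nat) (O : regionR d) : Prop :=
  (exists x, O x) /\ exists B : R, forall x, O x -> forall i, (Rabs (x i) <= B)%R.

Definition fat (d : nat) (alpha : R) (O : regionR d) : Prop :=
  nonempty_bounded O /\ openR O /\
  exists a b, in_width O a /\ out_width O b /\ (b <= alpha * a)%R.

(* Integer grid P = (0,N)^d ∩ Z^d, represented by 'I_d -> nat. *)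
Definition gpt (d : nat) := 'I_d -> nat.
Definition inP (d N : nat) (x : gpt d) : Prop := forall i, 0 < x i < N.
Definition toR (d : nat) (x : gpt d) : pointR d := fun i => INR (x i).

Definition ell_nat (i : nat) : nat := logn 2 i.
(* ell(x) = min_i ell(x_i).  (The seed \max_i ell(x_i) is >= every term, so for
   d >= 1 this is exactly the minimum.) *)
Definition ell_pt (d : nat) (x : gpt d) : nat :=
  let seed := \max_(i < d) ell_nat (x i) in
  \big[minn/seed]_(i < d) ell_nat (x i).

Definition ell_set_is (d N : nat) (O : regionR d) (l : nat) : Prop :=
  (exists x, inP N x /\ O (toR x) /\ ell_pt x = l) /\
  (forall x, inP N x -> O (toR x) -> ell_pt x <= l).

Definition hits (d N : nat) (P' : gpt d -> Prop) (O : regionR d) : Prop :=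
  exists y, P' y /\ inP N y /\ O (toR y).

Definition alg_step (d N : nat) (P' : gpt d -> Prop) (O : regionR d) : gpt d -> Prop :=
  fun x => P' x \/
    (~ hits N P' O /\ inP N x /\ O (toR x) /\
       forall y, inP N y -> O (toR y) -> ell_pt y <= ell_pt x).

(* ALG's set P' after processing O 0, ..., O (j-1). *)
Fixpoint alg_state (d N : nat) (O : nat -> regionR d) (j : nat) : gpt d -> Prop :=
  match j with
  | 0 => fun _ => False
  | j'.+1 => alg_step N (alg_state N O j') (O j')
  end.

Definition unhit (d N : nat) (O : nat -> regionR d) (j : nat) : Prop :=
  ~ hits N (alg_state N O j) (O j).

(* Main.v *)
Require Import Defs.
From mathcomp Require Import all_boot.
From mathcomp Require Import boolp.
From Stdlib Require Import Reals Lra Lia ZArith.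
From mathcomp Require Import zify.

Lemma bigmin_le (d : nat) (F : 'I_d -> nat) s i :
  \big[minn/s]_(j < d) F j <= F i.
Proof.
rewrite unlock /=.
have : i \in index_enum 'I_d by rewrite mem_index_enum.
elim: (index_enum 'I_d) => [//|a r IH] /=.
rewrite in_cons => /orP [/eqP <-|ir]; first by rewrite geq_minl.
by rewrite (leq_trans (geq_minr _ _)) // IH.
Qed.

Lemma ell_pt_le (d : nat) (x : gpt d) i : ell_pt x <= ell_nat (x i).
Proof. exact: bigmin_le. Qed.

Lemma ell_pt_ge (d : nat) (x : gpt d) k (i0 : 'I_d) :
  (forall i, k <= ell_nat (x i)) -> k <= ell_pt x.
Proof.
move=> H; rewrite /ell_pt.
have Hs : k <= \max_(i < d) ell_nat (x i).
  exact: leq_trans (H i0) (@leq_bigmax _ (fun i => ell_nat (x i)) i0).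
apply: (big_rec (fun v => k <= v) Hs).
by move=> i v _ kv; rewrite leq_min H.
Qed.

Lemma dvd_ell k n : 0 < n -> (expn 2 k %| n) = (k <= ell_nat n).
Proof. by move=> n0; rewrite pfactor_dvdn. Qed.

Lemma alg_mono (d N : nat) (O : nat -> regionR d) j k x :
  j <= k -> alg_state N O j x -> alg_state N O k x.
Proof.
elim: k => [|k IH]; first by rewrite leqn0 => /eqP ->.
rewrite leq_eqVlt => /orP [/eqP -> //| jk] H.
by left; apply: IH.
Qed.
Lemma modeq_small a b K : 0 < K -> a %% K = b %% K -> b <= a -> a - b < K -> a = b.
move=> K0 e ba lt.
have ea := divn_eq a K; have eb := divn_eq b K.
rewrite e in ea.
move: ea eb; set qa := a %/ K; set qb := b %/ K; set r := b %% K => ea eb.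
have : qb <= qa. rewrite leqNgt; apply/negP => h.
 have : qa * K + K <= qb * K by rewrite -mulSnr leq_mul2r h orbT.
 lia.
move=> h2.
have : qa <= qb. rewrite leqNgt; apply/negP => h.
 have : qb * K + K <= qa * K by rewrite -mulSnr leq_mul2r h orbT.
 lia.
move=> h3.
have eq : qa = qb by apply/eqP; rewrite eqn_leq h2 h3.
by rewrite ea eb eq.
Qed.

Lemma INR_mul m n : INR (m * n) = (INR m * INR n)%R.
Proof. exact: mult_INR. Qed.

Lemma INR_exp m n : INR (expn m n) = (INR m ^ n)%R.
Proof. elim: n => [//|n IH]; by rewrite expnS INR_mul IH. Qed.

Lemma INR_ltn m n : (INR m < INR n)%R -> m < n.
Proof. by move/INR_lt/ltP. Qed.

Lemma inwidth_bound (d N : nat) (O : regionR d) l a (i0 : 'I_d) :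
  (forall x, O x -> forall i, (0 < x i < INR N)%R) ->
  ell_set_is N O l -> in_width O a -> (a <= INR (expn 2 l.+1))%R.
Proof.
move=> Hb [_ Hl] [_ Hlub]; apply: Hlub => w [w0 [c Hc]].
apply: Rnot_lt_le => Hw.
set W := INR (expn 2 l.+1) in Hw *.
have Wpos : (0 < W)%R by apply: lt_0_INR; apply/ltP; rewrite expn_gt0.
have cpos : forall i, (0 < c i)%R.
  move=> i; apply: (proj1 (Hb c (Hc c _) i)) => j; lra.
pose x : gpt d := fun i => Z.to_nat (up (c i / W)) * expn 2 l.+1.
have Hx : forall i, (c i <= INR (x i) <= c i + w)%R.
  move=> i; rewrite /x INR_mul -/W INR_IZR_INZ Z2Nat.id.
    have [h1 h2] := archimed (c i / W).
    have e : (c i / W * W = c i)%R by field; lra.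
    split; nra.
  apply: le_IZR; have [h1 _] := archimed (c i / W).
  have : (0 < c i / W)%R by apply: Rdiv_lt_0_compat.
  lra.
have Ox : O (toR x) by apply: Hc.
have Px : inP N x.
  move=> i; have [h1 h2] := Hb _ Ox i.
  by rewrite (@INR_ltn 0 (x i) h1) (@INR_ltn (x i) N h2).
have := Hl x Px Ox.
have : l.+1 <= ell_pt x.
  apply: (@ell_pt_ge d x l.+1 i0) => i.
  rewrite -dvd_ell; last by case/andP: (Px i).
  exact: dvdn_mull.
move=> h1 h2; have := leq_trans h1 h2; by rewrite ltnn.
Qed.

Lemma box (d N : nat) (O : regionR d) alpha l (i0 : 'I_d) (p q : gpt d) :
  (forall x, O x -> forall i, (0 < x i < INR N)%R) -> fat alpha O -> (1 <= alpha)%R ->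
  ell_set_is N O l -> O (toR p) -> O (toR q) ->
  forall i, (INR (q i) - INR (p i) <= alpha * INR (expn 2 l.+1))%R.
Proof.
move=> Hb [_ [_ [a [b [Hin [Hout hb]]]]]] a1 Hl Hp Hq i.
have ha := @inwidth_bound d N O l a i0 Hb Hl Hin.
have hb2 : (INR (q i) - INR (p i) <= b)%R.
  apply: (proj2 Hout) => w [w0 [c Hc]].
  have := Hc _ Hp i; have := Hc _ Hq i; rewrite /toR; lra.
have : (alpha * a <= alpha * INR (expn 2 l.+1))%R.
  by apply: Rmult_le_compat_l; lra.
lra.
Qed.

Theorem mainTheorem6 (d N m : nat) (alpha : R) (O : nat -> regionR d) :
  1 <= d -> 2 <= N -> (1 <= alpha)%R ->
  (forall j, j < m ->
     [/\ forall x : pointR d, O j x -> forall i, (0 < x i < INR N)%R,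
         fat alpha (O j)
       & exists x : gpt d, inP N x /\ O j (toR x)]) ->
  forall (l : nat) (p : gpt d), inP N p ->
    (INR #|[set j : 'I_m | `[< unhit N O j /\ ell_set_is N (O j) l /\ O j (toR p) >]]|
       <= (4 * alpha + 1) ^ d)%R.
Proof.
move=> d1 N2 a1 Hj l p Hp.
set S := [set j : 'I_m | _].
have inS : forall j, j \in S -> unhit N O j /\ ell_set_is N (O j) l /\ O j (toR p).
  by move=> j; rewrite inE => /asboolP.
have hex : forall j : 'I_m, exists y : gpt d, j \in S ->
    inP N y /\ O j (toR y) /\ ell_pt y = l.
  move=> j; case: (boolP (j \in S)) => jS; last by exists (fun _ => 0).
  have [_ [[[y [Hy1 [Hy2 Hy3]]] _] _]] := inS j jS.
  by exists y.
have [q Hq] := choice hex.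
pose i0 : 'I_d := Ordinal d1.
have notin : forall j k, j \in S -> k \in S -> j < k -> ~ O j (toR (q k)).
  move=> j k jS kS jk Ojk.
  have [uk _] := inS k kS.
  have [uj [[_ Hlj] _]] := inS j jS.
  have [Pk [Ok Lk]] := Hq k kS.
  apply: uk; exists (q k); split => //.
  apply: (@alg_mono d N O j.+1 k) => //.
  right; split => //; split => //; split => //.
  by move=> y Py Oy; rewrite Lk; apply: Hlj.
have qinj : forall j k, j \in S -> k \in S -> q j = q k -> j = k.
  move=> j k jS kS e.
  case: (ltngtP j k) => [jk|kj|/val_inj //].
  - by case: (notin j k jS kS jk); rewrite -e; case: (Hq j jS) => _ [].
  - by case: (notin k j kS jS kj); rewrite e; case: (Hq k kS) => _ [].
have [hK1 hK2] := archimed (4 * alpha).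
have upos : (0 <= up (4 * alpha))%Z by apply: le_IZR; lra.
pose K := Z.to_nat (up (4 * alpha)).
have eK : INR K = IZR (up (4 * alpha)) by rewrite /K INR_IZR_INZ Z2Nat.id.
have K0 : 0 < K by apply: (@INR_ltn 0 K); rewrite eK /=; lra.
pose U := expn 2 l.
have U0 : 0 < U by rewrite expn_gt0.
pose f (j : 'I_m) : {ffun 'I_d -> 'I_K} :=
  [ffun i => Ordinal (ltn_pmod (q j i %/ U) K0)].
have finj : {in S &, injective f}.
  move=> j k jS kS e; apply: qinj => //.
  apply: funext => i.
  have := congr1 (fun g : {ffun 'I_d -> 'I_K} => val (g i)) e; rewrite /f !ffunE /= => em.
  have [Pj [Oj Lj]] := Hq j jS; have [Pk [Ok Lk]] := Hq k kS.
  have dv : forall (y : gpt d), inP N y -> ell_pt y = l -> U %| y i.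
    move=> y Py Ly; rewrite dvd_ell; last by case/andP: (Py i).
    by rewrite -Ly ell_pt_le.
  rewrite -(divnK (dv _ Pj Lj)) -(divnK (dv _ Pk Lk)); congr (_ * _).
  have [Hbj Hfj _] := Hj j (ltn_ord j); have [Hbk Hfk _] := Hj k (ltn_ord k).
  have [_ [[_ Hlj] Opj]] := inS j jS; have [_ [[_ Hlk] Opk]] := inS k kS.
  have b1 := @box d N (O j) alpha l i0 p (q j) Hbj Hfj a1 (conj (ex_intro _ (q j) (conj Pj (conj Oj Lj))) Hlj) Opj Oj i.
  have b2 := @box d N (O k) alpha l i0 p (q k) Hbk Hfk a1 (conj (ex_intro _ (q k) (conj Pk (conj Ok Lk))) Hlk) Opk Ok i.
  have b1' := @box d N (O j) alpha l i0 (q j) p Hbj Hfj a1 (conj (ex_intro _ (q j) (conj Pj (conj Oj Lj))) Hlj) Oj Opj i.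
  have b2' := @box d N (O k) alpha l i0 (q k) p Hbk Hfk a1 (conj (ex_intro _ (q k) (conj Pk (conj Ok Lk))) Hlk) Ok Opk i.
  have ej := esym (divnK (dv _ Pj Lj)); have ek := esym (divnK (dv _ Pk Lk)).
  rewrite ej in b1 b1'; rewrite ek in b2 b2'.
  move: b1 b2 b1' b2'.
  rewrite !INR_mul expnS INR_mul -/U.
  set tj := q j i %/ U in em ej *; set tk := q k i %/ U in em ek *.
  have Upos : (0 < INR U)%R by apply: lt_0_INR; apply/ltP.
  move=> b1 b2 b1' b2'.
  have d1' : (INR tj - INR tk < INR K)%R.
    apply: (Rmult_lt_reg_r (INR U)) => //; rewrite /= in b1 b2 b1' b2'; nra.
  have d2' : (INR tk - INR tj < INR K)%R.
    apply: (Rmult_lt_reg_r (INR U)) => //; rewrite /= in b1 b2 b1' b2'; nra.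
  case: (leqP tk tj) => h.
    apply: (@modeq_small tj tk K K0 em) => //.
    by apply: INR_ltn; rewrite minus_INR //; apply/leP.
  apply/esym; apply: (@modeq_small tk tj K K0 (esym em)) => //; first by apply/ltnW.
  by apply: INR_ltn; rewrite minus_INR //; apply/leP; apply/ltnW.
have cardS : #|S| <= expn K d.
  rewrite -(card_in_imset finj).
  apply: leq_trans (max_card _) _.
  by rewrite card_ffun !card_ord.
apply: Rle_trans (le_INR _ _ (leP cardS)) _.
rewrite INR_exp; apply: pow_incr; split; first exact: pos_INR.
rewrite eK; lra.
Qed.
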